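(* Let $0<1/n_0\ll\beta\ll1$, let $n\ge n_0$ and let $\varepsilon\in(0,1)$. Let $\mathcal H$ be an $n$-vertex linear hypergraph with no singleton edges, let $G$ be the graph on $V(\mathcal H)$ whose edges are the edges of $\mathcal H$ of size $2$, and let $M=\{e\}$ be a difficult matching (with respect to $\varepsilon$) where $e$ is a huge edge, i.e. $|e|\ge\beta n/4$. Then at least one of the following holds: (a) there is a matching $M'$ of $\mathcal H$ with $M\subseteq M'$, $M'\setminus M\subseteq E(G)$, such that $M'$ covers every vertex of degree exactly $n-1$ in $\mathcal H$ and all but at most five of the vertices of degree exactly $n-2$ in $\mathcal H$; or (b) $\chi'(\mathcal H)\le n$.
   Context: A hypergraph has a finite vertex set and a set of nonempty edges (size-one edges are called singleton edges); linear means any two distinct edges share at most one vertex. Degrees are numbers of edges containing a vertex. A matching is a set of pairwise disjoint edges; it covers the vertices in its edges. Let $U$ be the set of vertices of degree at least $(1-\varepsilon)n$ in $G$. A matching $M$ is difficult if $|V(\mathcal H)\setminus U|\ge2$ and $M$ covers at least $3|V(\mathcal H)\setminus U|/4$ of the vertices in $V(\mathcal H)\setminus U$. $\chi'$ is the chromatic index. *)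

(* Defs.v *)
From HB Require Import structures.
From mathcomp Require Import all_boot all_order all_algebra.
From mathcomp Require Import reals.
Set Implicit Arguments. Unset Strict Implicit. Unset Printing Implicit Defensive.
Import Order.TTheory GRing.Theory Num.Theory.

Definition hyp_edges_nonempty (T : finType) (E : {set {set T}}) : Prop :=
  forall f, f \in E -> f != set0.

Definition linear_hyp (T : finType) (E : {set {set T}}) : Prop :=
  forall f g, f \in E -> g \in E -> f != g -> #|f :&: g| <= 1.

Definition no_singleton_edges (T : finType) (E : {set {set T}}) : Prop :=
  forall f, f \in E -> #|f| != 1.

Definition hdeg (T : finType) (E : {set {set T}}) (v : T) : nat :=
  #|[set f in E | v \in f]|.

Definition gdeg (T : finType) (E : {set {set T}}) (v : T) : nat :=
  #|[set f in E | (v \in f) && (#|f| == 2)]|.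

Definition is_matching (T : finType) (E M : {set {set T}}) : Prop :=
  M \subset E /\
  forall f g, f \in M -> g \in M -> f != g -> [disjoint f & g].

Definition covered (T : finType) (M : {set {set T}}) : {set T} :=
  \bigcup_(f in M) f.

Definition Uset (R : realType) (T : finType) (E : {set {set T}}) (eps : R)
  (n : nat) : {set T} :=
  [set v | ((1 - eps) * n%:R <= (gdeg E v)%:R)%R].

Definition difficult (R : realType) (T : finType) (E M : {set {set T}})
  (eps : R) (n : nat) : Prop :=
  let W := ~: Uset E eps n in
  2 <= #|W| /\ 3 * #|W| <= 4 * #|covered M :&: W|.

(* proper edge colouring with k colours: edges sharing a vertex get distinct
   colours. chi'(H) <= k  iff  such a colouring exists. *)
Definition edge_colorable (T : finType) (E : {set {set T}}) (k : nat) : Prop :=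
  exists c : {set T} -> 'I_k,
    forall f g, f \in E -> g \in E -> f != g -> ~~ [disjoint f & g] ->
      c f != c g.

(* Main.v *)
Require Import Defs.
From HB Require Import structures.
From mathcomp Require Import all_boot all_order all_algebra.
From mathcomp Require Import reals.
From mathcomp Require Import zify.
Import Order.TTheory GRing.Theory Num.Theory.
Set Implicit Arguments. Unset Strict Implicit. Unset Printing Implicit Defensive.
Lemma deg_bound (T : finType) (E : {set {set T}}) (v : T) :
  hyp_edges_nonempty E -> linear_hyp E -> no_singleton_edges E ->
  (#|[set~ v] :\: [set y | [set v; y] \in E]| <= 2 * (#|T|.-1 - hdeg E v))%N.
Proof.
move=> hne hlin hns.
set S := [set f in E | v \in f].
set B := [set f : {set T} | #|f| == 2].
set X := [set~ v].
have key : (\sum_(f in S) #|f :\ v| <= #|X|)%N.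
  have e1 : forall f, #|f :\ v| = \sum_(y in X) (if y \in f then 1 else 0)%N.
    move=> f; rewrite -big_mkcondr /= sum1dep_card; apply: eq_card => y.
    by rewrite !inE andbC.
  rewrite (eq_bigr _ (fun f _ => e1 f)) exchange_big /= -sum1_card.
  apply: leq_sum => y yX.
  rewrite -big_mkcondr /= sum1dep_card.
  apply/card_le1_eqP => f g; rewrite !inE => /andP[/andP[fE vf] yf] /andP[/andP[gE vg] yg].
  apply/eqP; apply: contraT => fg.
  have := hlin g f gE fE fg.
  have yv : y != v by move: yX; rewrite /X !inE.
  have sub : [set v; y] \subset g :&: f.
    by apply/subsetP => z; rewrite !inE => /orP[]/eqP->; rewrite ?vf ?vg ?yf ?yg.
  have := subset_leq_card sub; rewrite cards2 eq_sym yv /=.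
  by move=> h1 h2; have := leq_trans h1 h2.
have lo : (#|S :&: B| + 2 * #|S :\: B| <= \sum_(f in S) #|f :\ v|)%N.
  rewrite (big_setID B) /=; apply: leq_add.
    rewrite -sum1_card; apply: leq_sum => f; rewrite !inE => /andP[/andP[fE vf] _].
    have := cardsD1 v f; rewrite vf => h; move: (hne f fE) (hns f fE).
    rewrite -card_gt0; lia.
  rewrite mulnC -sum_nat_const; apply: leq_sum => f; rewrite !inE => /andP[/negbTE fB /andP[fE vf]].
  have := cardsD1 v f; rewrite vf => h; move: (hne f fE) (hns f fE) fB.
  rewrite -card_gt0; lia.
have inj : (#|S :&: B| <= #|X :&: [set y | [set v; y] \in E]|)%N.
  apply: (leq_trans _ (leq_imset_card (fun y => [set v; y]) _)).
  apply: subset_leq_card; apply/subsetP => f; rewrite !inE => /andP[/andP[fE vf] /cards2P [a [b [ab fab]]]].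
  rewrite fab in fE; move: vf; rewrite fab !inE => /orP[]/eqP va.
    apply/imsetP; exists b; first by rewrite !inE va eq_sym ab fE.
    by rewrite va.
  apply/imsetP; exists a; first by rewrite !inE va ab setUC fE.
  by rewrite va setUC.
have hd : hdeg E v = (#|S :&: B| + #|S :\: B|)%N by rewrite cardsID.
have hX := cardsID [set y | [set v; y] \in E] X.
have cX : #|X| = #|T|.-1 by rewrite cardsC1.
rewrite hd; lia.
Qed.
Definition goodM (T : finType) (E : {set {set T}}) (D1 D2 : pred T) (F : {set T})
  (M : {set {set T}}) : Prop :=
 [/\ M \subset E, (forall f, f \in M -> #|f| = 2 /\ f \subset F),
     (forall f g, f \in M -> g \in M -> f != g -> [disjoint f & g]),
     (forall x, x \in F -> D1 x -> x \in covered M) &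
     (#|[set x in F | D2 x & x \notin covered M]| <= 3)].

Lemma coveredP (T : finType) (M : {set {set T}}) x :
  reflect (exists2 f, f \in M & x \in f) (x \in covered M).
Proof. exact: bigcupP. Qed.

Lemma step_good (T : finType) (E : {set {set T}}) (D1 D2 : pred T) (F : {set T}) M v p :
  v \in F -> p \in F -> v != p -> [set v; p] \in E ->
  goodM E D1 D2 (F :\ v :\ p) M -> goodM E D1 D2 F ([set v; p] |: M).
Proof.
move=> vF pF vp eE [sub sz dis cov left].
have inF' : forall g z, g \in M -> z \in g -> [/\ z \in F, z != v & z != p].
  move=> g z gM zg; have [_ /subsetP gs] := sz g gM; have := gs z zg.
  by rewrite !inE => /and3P[].
have disP : forall g, g \in M -> [disjoint [set v; p] & g].
  move=> g gM; rewrite disjoints_subset; apply/subsetP => z.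
  rewrite !inE => /orP[]/eqP->; apply/negP => zg; have [_ h1 h2] := inF' g _ gM zg;
  by rewrite ?eqxx in h1 h2.
have covS : forall x, x \in covered M -> x \in covered ([set v; p] |: M).
  move=> x /coveredP [f fM xf]; apply/coveredP; exists f => //; by rewrite in_setU1 fM orbT.
split.
- apply/subsetP => f; rewrite in_setU1 => /orP[/eqP-> // | /(subsetP sub) //].
- move=> f; rewrite in_setU1 => /orP[/eqP-> | fM].
    split; first by rewrite cards2 vp.
    by apply/subsetP => z; rewrite !inE => /orP[]/eqP->.
  have [h1 /subsetP h2] := sz f fM; split=> //; apply/subsetP => z zf.
  by have [] := inF' f z fM zf.
- move=> f g; rewrite !in_setU1 => /orP[/eqP-> | fM] /orP[/eqP-> | gM] fg.
  + by rewrite eqxx in fg.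
  + exact: disP.
  + by rewrite disjoint_sym; apply: disP.
  + exact: dis.
- move=> x xF D1x.
  case: (boolP ((x == v) || (x == p))) => [xvp | ].
    apply/coveredP; exists [set v; p]; first by rewrite in_setU1 eqxx.
    by rewrite !inE.
  rewrite negb_or => /andP[xv xp]; apply: covS; apply: cov => //.
  by rewrite !inE xv xp xF.
- apply: leq_trans left; apply: subset_leq_card; apply/subsetP => x.
  rewrite !inE => /and3P[xF D2x ncov].
  have xv : x != v.
    apply: (contraNneq _ ncov) => ->; apply/coveredP; exists [set v; p]; by rewrite ?in_setU1 ?eqxx ?inE ?eqxx.
  have xp : x != p.
    apply: (contraNneq _ ncov) => ->; apply/coveredP; exists [set v; p]; by rewrite ?in_setU1 ?eqxx ?inE ?eqxx ?orbT.
  rewrite xv xp xF D2x /=; exact: (contra (covS x) ncov).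
Qed.

Lemma greedy (T : finType) (E : {set {set T}}) (D1 D2 : pred T)
  (h1 : forall v y, D1 v -> y != v -> [set v; y] \in E)
  (h2 : forall v, D2 v -> (#|[set~ v] :\: [set y | [set v; y] \in E]| <= 2)%N) :
  forall F : {set T}, ((exists v, (v \in F) && D1 v) -> exists w, (w \in F) && ~~ D1 w) ->
  exists M, goodM E D1 D2 F M.
Proof.
move=> F; move: {2}#|F| (leqnn #|F|) => k; elim: k F => [|k IH] F.
  rewrite leqn0 cards_eq0 => /eqP-> _; exists set0; split.
  - exact: sub0set.
  - by move=> f; rewrite inE.
  - by move=> f g; rewrite inE.
  - by move=> x; rewrite inE.
  - by rewrite (_ : [set x in set0 | _ & _] = set0) ?cards0 //; apply/setP => x; rewrite !inE.
move=> Fk hw.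
have rec : forall v p, v \in F -> p \in F -> v != p -> [set v; p] \in E ->
    ((exists x, (x \in F :\ v :\ p) && D1 x) -> exists w, (w \in F :\ v :\ p) && ~~ D1 w) ->
    exists M, goodM E D1 D2 F M.
  move=> v p vF pF vp eE hw'.
  have ck : #|F :\ v :\ p| <= k.
    have := cardsD1 v F; have := cardsD1 p (F :\ v); rewrite vF !inE eq_sym vp pF /=. lia.
  have [M gM] := IH _ ck hw'.
  by exists ([set v; p] |: M); apply: step_good.
case: (pickP (fun v => (v \in F) && D1 v)) => [v /andP[vF D1v] | noD1].
  have [w /andP[wF nD1w]] := hw (ex_intro _ v (introT andP (conj vF D1v))).
  have wv : w != v by apply/eqP => wv; move: nD1w; rewrite wv D1v.
  case: (pickP (fun u => [&& u \in F, D1 u & u != v])) => [u /and3P[uF D1u uv] | nou].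
    apply: (rec v u vF uF); first by rewrite eq_sym.
      by apply: h1.
    move=> _; exists w; have wu : w != u by apply/eqP => wu; move: nD1w; rewrite wu D1u.
    by rewrite !inE wF nD1w wv wu.
  apply: (rec v w vF wF); first by rewrite eq_sym.
    by apply: h1.
  move=> [x]; rewrite !inE => /andP[/and3P[xw xv xF] D1x].
  by have := nou x; rewrite xF D1x xv.
have nD1 : forall x, x \in F -> ~~ D1 x.
  by move=> x xF; apply/negP => D1x; have := noD1 x; rewrite xF D1x.
have nhw : forall G : {set T}, G \subset F -> (exists x, (x \in G) && D1 x) -> exists w, (w \in G) && ~~ D1 w.
  move=> G GF [x /andP[xG D1x]]; by have := nD1 x (subsetP GF x xG); rewrite D1x.
case: (pickP (fun xy : T * T => [&& xy.1 \in F, xy.2 \in F, D2 xy.1, D2 xy.2, xy.1 != xy.2 & [set xy.1; xy.2] \in E]))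
  => [[x y] /and5P[/= xF yF D2x D2y /andP[xy eE]] | nopair].
  apply: (rec x y xF yF xy eE); apply: nhw.
  by apply/subsetP => z; rewrite !inE => /and3P[].
exists set0; split.
- exact: sub0set.
- by move=> f; rewrite inE.
- by move=> f g; rewrite inE.
- by move=> x xF D1x; have := nD1 x xF; rewrite D1x.
rewrite leqNgt; apply/negP => big.
have [x xR] : exists x, x \in [set x in F | D2 x & x \notin covered set0].
  by apply/set0Pn; rewrite -card_gt0; apply: leq_trans big.
move: (xR); rewrite !inE => /and3P[xF D2x _].
set R := [set x in F | D2 x & x \notin covered set0] in big xR.
have : ~~ (R :\ x \subset [set~ x] :\: [set y | [set x; y] \in E]).
  apply/negP => /subset_leq_card; have := h2 x D2x; have := cardsD1 x R; rewrite xR. lia.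
case/subsetPn => y; rewrite !inE => /andP[yx /and3P[yF D2y _]].
rewrite yx andbT negbK => eE.
by have := nopair (x, y); rewrite /= xF yF D2x D2y eq_sym yx eE.
Qed.

Lemma D1_adj (T : finType) (E : {set {set T}}) (v y : T) :
  hyp_edges_nonempty E -> linear_hyp E -> no_singleton_edges E ->
  hdeg E v = #|T|.-1 -> y != v -> [set v; y] \in E.
Proof.
move=> hne hlin hns hv yv.
have := deg_bound v hne hlin hns; rewrite hv subnn muln0 leqn0 cards_eq0 => /eqP h.
apply: contraT => nE.
have : y \in [set~ v] :\: [set y | [set v; y] \in E] by rewrite !inE yv nE.
by rewrite h inE.
Qed.

Lemma size2_of_out (T : finType) (E : {set {set T}}) (e f : {set T}) :
  hyp_edges_nonempty E -> linear_hyp E -> no_singleton_edges E ->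
  e \in E -> f \in E -> f != e -> exists2 o, o \in f & o \notin e.
Proof.
move=> hne hlin hns eE fE fe.
case: (boolP (f \subset e)) => [fsub | /subsetPn [o fo oe]]; last by exists o.
have := hlin f e fE eE fe; rewrite (setIidPl fsub) => h.
move: (hne f fE) (hns f fE); rewrite -card_gt0; lia.
Qed.

Lemma D1_size2 (T : finType) (E : {set {set T}}) (v : T) f :
  hyp_edges_nonempty E -> linear_hyp E -> no_singleton_edges E ->
  hdeg E v = #|T|.-1 -> f \in E -> v \in f -> #|f| = 2.
Proof.
move=> hne hlin hns hv fE vf.
have : 1 < #|f| by move: (hne f fE) (hns f fE); rewrite -card_gt0; lia.
case/card_gt1P => [a [b [af bf ab]]].
have [y yf yv] : exists2 y, y \in f & y != v.
  case: (eqVneq a v) => [av | av]; last by exists a.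
  by exists b => //; rewrite -av eq_sym.
have gE := D1_adj hne hlin hns hv yv.
have sub : [set v; y] \subset f by apply/subsetP => z; rewrite !inE => /orP[]/eqP->.
case: (eqVneq f [set v; y]) => [-> | fg]; first by rewrite cards2 eq_sym yv.
have := hlin _ _ fE gE fg; rewrite (setIidPr sub) cards2 eq_sym yv //.
Qed.

Lemma coloring (T : finType) (E : {set {set T}}) (e : {set T}) :
  hyp_edges_nonempty E -> linear_hyp E -> no_singleton_edges E -> e \in E ->
  0 < #|T| -> (forall v, v \notin e -> hdeg E v = #|T|.-1) ->
  edge_colorable E #|T|.
Proof.
move=> hne hlin hns eE n_gt0 hD1.
set n := #|T|.
set s := enum (~: e) ++ enum e.
set m := #|~: e|.
pose phi x := index x s.
have sz : size s = n by rewrite size_cat -!cardE addnC cardsC.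
have inS : forall x, x \in s by move=> x; rewrite mem_cat !mem_enum inE; case: (x \in e).
have P1 : forall x, phi x < n by move=> x; rewrite -sz index_mem.
have P2 : forall x, x \notin e -> phi x < m.
  move=> x xe; rewrite /phi index_cat mem_enum inE xe /m cardE index_mem mem_enum inE //.
have P3 : forall x, x \in e -> m <= phi x.
  move=> x xe; rewrite /phi index_cat mem_enum inE xe /= /m cardE; exact: leq_addr.
have P4 : forall x y, phi x = phi y -> x = y.
  move=> x y h; rewrite -(nth_index x (inS x)) -(nth_index x (inS y)); by rewrite /phi in h; rewrite h.
pose colv (f : {set T}) := if f == e then m.-1 else \sum_(x in f) phi x.
exists (fun f => Ordinal (ltn_pmod (colv f) n_gt0)).
have two : forall f, f \in E -> f != e -> #|f| = 2.
  move=> f fE fe; have [o fo oe] := size2_of_out hne hlin hns eE fE fe.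
  exact: (D1_size2 hne hlin hns (hD1 o oe) fE fo).
have split2 : forall (f : {set T}) (a : T), #|f| = 2 -> a \in f -> exists b, f :\ a = [set b] /\ \sum_(x in f) phi x = phi a + phi b.
  move=> f a f2 af; have : #|f :\ a| == 1 by have := cardsD1 a f; rewrite af f2; lia.
  case/cards1P => b fb; exists b; split => //.
  by rewrite (big_setD1 _ af) fb big_set1.
have eNe : forall (g : {set T}) (x : T), g \in E -> g != e -> x \in g -> x \in e ->
    (\sum_(y in g) phi y) %% n != m.-1 %% n.
  move=> g x gE ge xg xe.
  have [o [go so]] := split2 g x (two g gE ge) xg.
  have [o' o'g o'e] := size2_of_out hne hlin hns eE gE ge.
  have o'x : o' != x by apply: contraNneq o'e => ->.
  have : o' \in g :\ x by rewrite !inE o'x.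
  rewrite go inE => /eqP oo; rewrite oo in o'e.
  have := P2 o o'e; have := P3 x xe; have := P1 x; rewrite so.
  have mn : m.-1 < n by have := P3 x xe; have := P1 x; lia.
  rewrite (modn_small mn).
  move=> h1 h2 h3; apply/eqP => h.
  case: (ltnP (phi x + phi o) n) => hl.
    by move: h; rewrite modn_small //; lia.
  have : (phi x + phi o) %% n = phi x + phi o - n.
    have -> : phi x + phi o = (phi x + phi o - n) + n by lia.
    rewrite modnDr modn_small; lia.
  lia.
move=> f g fE gE fg; rewrite -setI_eq0 => /set0Pn [x]; rewrite inE => /andP[xf xg].
rewrite -(inj_eq val_inj) /= /colv.
case: (eqVneq f e) => [fe|fe]; case: (eqVneq g e) => [ge|ge].
- by rewrite fe ge eqxx in fg.
- by rewrite eq_sym; apply: (eNe g x) => //; rewrite -fe.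
- by apply: (eNe f x) => //; rewrite -ge.
have [b [fb sf]] := split2 f x (two f fE fe) xf.
have [c [gc sg]] := split2 g x (two g gE ge) xg.
rewrite sf sg; apply/negP; rewrite eqn_modDl !modn_small // => /eqP /P4 bc.
move: fg; rewrite -(setD1K xf) -(setD1K xg) fb gc bc eqxx //.
Qed.

Lemma lemma7_nat (T : finType) (E : {set {set T}}) (e : {set T}) :
    0 < #|T| ->
    hyp_edges_nonempty E -> linear_hyp E -> no_singleton_edges E ->
    e \in E ->
    (exists M' : {set {set T}},
        [/\ is_matching E M', e \in M',
            (forall f, f \in M' -> f != e -> #|f| = 2%N),
            (forall v, hdeg E v = #|T|.-1 -> v \in covered M') &
            (#|[set v | (hdeg E v == #|T|.-2) && (v \notin covered M')]| <= 5)%N])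
    \/ edge_colorable E #|T|.
Proof.
move=> n_gt0 hne hlin hns eE.
case: (boolP [forall v, (v \notin e) ==> (hdeg E v == #|T|.-1)]) => [allD1 | /forallPn [w]].
  right; apply: (coloring hne hlin hns eE n_gt0) => v ve.
  by apply/eqP; move/forallP/(_ v): allD1; rewrite ve.
rewrite negb_imply => /andP[we nw]; left.
have h1 : forall v y, (hdeg E v == #|T|.-1) -> y != v -> [set v; y] \in E.
  by move=> v y /eqP hv yv; apply: D1_adj.
have h2 : forall v, (hdeg E v == #|T|.-2) ->
    (#|[set~ v] :\: [set y | [set v; y] \in E]| <= 2)%N.
  move=> v /eqP hv; have := deg_bound v hne hlin hns; rewrite hv; lia.
have [M [sub sz dis cov left]] := greedy h1 h2 (F := ~: e)
  (fun _ => ex_intro _ w (introT andP (conj (introT setCP (negP we)) nw))).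
have covS : forall x, x \in covered M -> x \in covered (e |: M).
  move=> x /coveredP [f fM xf]; apply/coveredP; exists f => //; by rewrite in_setU1 fM orbT.
have disE : forall g, g \in M -> [disjoint e & g].
  move=> g gM; rewrite disjoint_sym disjoints_subset; have [_ ->] := sz g gM; done.
exists (e |: M); split.
- split.
    by apply/subsetP => f; rewrite in_setU1 => /orP[/eqP-> // | /(subsetP sub) //].
  move=> f g; rewrite !in_setU1 => /orP[/eqP-> | fM] /orP[/eqP-> | gM] fg.
  + by rewrite eqxx in fg.
  + exact: disE.
  + by rewrite disjoint_sym; apply: disE.
  + exact: dis.
- by rewrite in_setU1 eqxx.
- move=> f; rewrite in_setU1 => /orP[/eqP-> | fM]; first by rewrite eqxx.
  by have [] := sz f fM.
- move=> v hv; case: (boolP (v \in e)) => ve.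
    by apply/coveredP; exists e => //; rewrite in_setU1 eqxx.
  by apply: covS; apply: cov; rewrite ?inE ?ve ?hv.
apply: leq_trans (leq_trans left _) => //.
apply: subset_leq_card; apply/subsetP => x; rewrite !inE => /andP[D2x ncov].
have xe : x \notin e.
  by apply: (contra _ ncov) => xe; apply/coveredP; exists e => //; rewrite in_setU1 eqxx.
by rewrite xe D2x (contra (covS x) ncov).
Qed.

Local Open Scope ring_scope.

Theorem lemma7 (R : realType) :
  exists beta0 : R, 0 < beta0 /\
  forall beta : R, 0 < beta -> beta < beta0 ->
  exists n0 : nat, (0 < n0)%N /\
  forall (n : nat) (eps : R) (T : finType) (E : {set {set T}}) (e : {set T}),
    (n0 <= n)%N -> 0 < eps -> eps < 1 ->
    #|T| = n ->
    hyp_edges_nonempty E -> linear_hyp E -> no_singleton_edges E ->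
    e \in E ->
    difficult E [set e] eps n ->
    beta * n%:R / 4 <= #|e|%:R ->
    (exists M' : {set {set T}},
        [/\ is_matching E M', e \in M',
            (forall f, f \in M' -> f != e -> #|f| = 2%N),
            (forall v, hdeg E v = n.-1 -> v \in covered M') &
            (#|[set v | (hdeg E v == n.-2) && (v \notin covered M')]| <= 5)%N])
    \/ edge_colorable E n.
Proof.
exists 1; split; first exact: ltr01.
move=> beta _ _; exists 1%N; split => //.
move=> n eps T E e n1 _ _ Tn hne hlin hns eE _ _.
rewrite -Tn; apply: lemma7_nat => //.
by rewrite Tn.
Qed.
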